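(* Let $A$ be an algebra over a field $k$ of characteristic $0$ with a double bracket $\{\!\{-,-\}\!\}$, associated bracket $\{a,b\}=\{\!\{a,b\}\!\}'\{\!\{a,b\}\!\}''$, and associated tri-ary operation $\{\!\{-,-,-\}\!\}$. Then for all $a,b,c\in A$ the following identity holds in $A\otimes A$: \[\{a,\{\!\{b,c\}\!\}\}-\{\!\{\{a,b\},c\}\!\}-\{\!\{b,\{a,c\}\}\!\}=(m\otimes1)\{\!\{a,b,c\}\!\}-(1\otimes m)\{\!\{b,a,c\}\!\},\] where $m$ is multiplication of $A$ and $\{a,-\}$ acts on tensors by $\{a,u\otimes v\}=\{a,u\}\otimes v+u\otimes\{a,v\}$.
   Context: Unadorned tensor products are over $k$; $x\in V\otimes W$ is written $x'\otimes x''$ (summation suppressed), $x^\circ=x''\otimes x'$, and $\tau_s(a_1\otimes\cdots\otimes a_n)=a_{s^{-1}(1)}\otimes\cdots\otimes a_{s^{-1}(n)}$ for $s\in S_n$. A double bracket on $A$ is a bilinear map $\{\!\{-,-\}\!\}:A\times A\to A\otimes A$ with $\{\!\{a,bc\}\!\}=b\{\!\{a,c\}\!\}+\{\!\{a,b\}\!\}c$ (outer bimodule structure $b(x\otimes y)c=bx\otimes yc$) and $\{\!\{a,b\}\!\}=-\{\!\{b,a\}\!\}^\circ$. For $a\in A$, $b=b_1\otimes\cdots\otimes b_n$, $\{\!\{a,b\}\!\}_L=\{\!\{a,b_1\}\!\}\otimes b_2\otimes\cdots\otimes b_n$. The associated tri-ary operation is $\{\!\{a,b,c\}\!\}=\{\!\{a,\{\!\{b,c\}\!\}\}\!\}_L+\tau_{(123)}\{\!\{b,\{\!\{c,a\}\!\}\}\!\}_L+\tau_{(132)}\{\!\{c,\{\!\{a,b\}\!\}\}\!\}_L$.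 *)

(* Defs.v *)
(* Tensor products over k are modelled concretely as
   formal k-linear combinations of pure tensors (the free k-module
   {malg k[A*A]} on A*A, resp. on A*A*A) modulo the k-submodule generated
   by the (bi/tri)linearity relations; equality in A (x) A is the
   relation [teq2] below, equality in A (x) A (x) A is [teq3]. *)
From HB Require Import structures.
From mathcomp Require Import all_boot all_order all_algebra.
From mathcomp Require Import finmap.
From mathcomp.multinomials Require Import monalg.
Set Implicit Arguments. Unset Strict Implicit. Unset Printing Implicit Defensive.
Import GRing.Theory.
Local Open Scope ring_scope.

Section Tensor.
Variables (k : fieldType) (A : algType k).

Definition T2 := {malg k[(A * A)%type]}.
Definition T3 := {malg k[(A * A * A)%type]}.

Definition tens2 (a b : A) : T2 := << (a, b) >>.
Definition tens3 (a b c : A) : T3 := << (a, b, c) >>.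

Inductive null2 : T2 -> Prop :=
| null2_addl a a' b : null2 (tens2 (a + a') b - tens2 a b - tens2 a' b)
| null2_addr a b b' : null2 (tens2 a (b + b') - tens2 a b - tens2 a b')
| null2_scalel (r : k) a b : null2 (tens2 (r *: a) b - r *: tens2 a b)
| null2_scaler (r : k) a b : null2 (tens2 a (r *: b) - r *: tens2 a b)
| null2_0 : null2 0
| null2_add x y : null2 x -> null2 y -> null2 (x + y)
| null2_scale (r : k) x : null2 x -> null2 (r *: x).

Inductive null3 : T3 -> Prop :=
| null3_add1 a a' b c : null3 (tens3 (a + a') b c - tens3 a b c - tens3 a' b c)
| null3_add2 a b b' c : null3 (tens3 a (b + b') c - tens3 a b c - tens3 a b' c)
| null3_add3 a b c c' : null3 (tens3 a b (c + c') - tens3 a b c - tens3 a b c')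
| null3_scale1 (r : k) a b c : null3 (tens3 (r *: a) b c - r *: tens3 a b c)
| null3_scale2 (r : k) a b c : null3 (tens3 a (r *: b) c - r *: tens3 a b c)
| null3_scale3 (r : k) a b c : null3 (tens3 a b (r *: c) - r *: tens3 a b c)
| null3_0 : null3 0
| null3_add x y : null3 x -> null3 y -> null3 (x + y)
| null3_scale (r : k) x : null3 x -> null3 (r *: x).

Definition teq2 (x y : T2) : Prop := null2 (x - y).
Definition teq3 (x y : T3) : Prop := null3 (x - y).

Definition lin2 (W : lmodType k) (f : A -> A -> W) (x : T2) : W :=
  \sum_(p <- msupp x) x@_p *: f p.1 p.2.
Definition lin3 (W : lmodType k) (f : A -> A -> A -> W) (x : T3) : W :=
  \sum_(p <- msupp x) x@_p *: f p.1.1 p.1.2 p.2.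

Definition bimod2 (b : A) (x : T2) (c : A) : T2 :=
  lin2 (fun u v => tens2 (b * u) (v * c)) x.
Definition swap2 (x : T2) : T2 := lin2 (fun u v => tens2 v u) x.
Definition mult2 (x : T2) : A := lin2 (fun u v => u * v) x.
Definition mult12 (x : T3) : T2 := lin3 (fun u v w => tens2 (u * v) w) x.
Definition mult23 (x : T3) : T2 := lin3 (fun u v w => tens2 u (v * w)) x.
(* tau_s (a1 (x) a2 (x) a3) = a_{s^-1(1)} (x) a_{s^-1(2)} (x) a_{s^-1(3)} *)
Definition tau123 (x : T3) : T3 := lin3 (fun u v w => tens3 w u v) x.
Definition tau132 (x : T3) : T3 := lin3 (fun u v w => tens3 v w u) x.

Variable br : A -> A -> T2.

Definition double_bracket : Prop :=
  (forall a a' b, teq2 (br (a + a') b) (br a b + br a' b)) /\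
  (forall (r : k) a b, teq2 (br (r *: a) b) (r *: br a b)) /\
  (forall a b b', teq2 (br a (b + b')) (br a b + br a b')) /\
  (forall (r : k) a b, teq2 (br a (r *: b)) (r *: br a b)) /\
  (forall a b c, teq2 (br a (b * c)) (bimod2 b (br a c) 1 + bimod2 1 (br a b) c)) /\
  (forall a b, teq2 (br a b) (- swap2 (br b a))).

Definition assoc_bracket (a b : A) : A := mult2 (br a b).

(* {{a, b1 (x) b2}}_L = {{a,b1}} (x) b2 *)
Definition brL (a : A) (x : T2) : T3 :=
  lin2 (fun u v => lin2 (fun p q => tens3 p q v) (br a u)) x.

Definition tri_bracket (a b c : A) : T3 :=
  brL a (br b c) + tau123 (brL b (br c a)) + tau132 (brL c (br a b)).

Definition assoc_bracket_T (a : A) (x : T2) : T2 :=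
  lin2 (fun u v => tens2 (assoc_bracket a u) v + tens2 u (assoc_bracket a v)) x.

End Tensor.

(* Main.v *)
Require Import Defs.
From HB Require Import structures.
From mathcomp Require Import all_boot all_order all_algebra.
From mathcomp Require Import finmap.
From mathcomp.multinomials Require Import monalg.
Set Implicit Arguments. Unset Strict Implicit. Unset Printing Implicit Defensive.
Import GRing.Theory.
Local Open Scope ring_scope.

Section LinGen.
Variables (k : fieldType) (K : choiceType) (W : lmodType k).

Definition Lin (F : K -> W) (x : {malg k[K]}) : W :=
  \sum_(p <- msupp x) x@_p *: F p.

Lemma LinEw (F : K -> W) (d : {fset K}) x : (msupp x `<=` d)%fset ->
  Lin F x = \sum_(p <- d) x@_p *: F p.
Proof.
move=> le; rewrite /Lin [LHS](big_fset_incl _ le) => //= p pd /mcoeff_outdom ->.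
by rewrite scale0r.
Qed.

Lemma LinD F x y : Lin F (x + y) = Lin F x + Lin F y.
Proof.
pose d := (msupp x `|` msupp y)%fset.
rewrite (@LinEw F d (x + y)) ?msuppD_le // (@LinEw F d x) ?fsubsetUl //
  (@LinEw F d y) ?fsubsetUr // -big_split /=.
by apply: eq_bigr => p _; rewrite mcoeffD scalerDl.
Qed.

Lemma LinZ F r x : Lin F (r *: x) = r *: Lin F x.
Proof.
rewrite (@LinEw F (msupp x) (r *: x)) ?msuppZ_le // /Lin scaler_sumr.
by apply: eq_bigr => p _; rewrite mcoeffZ scalerA.
Qed.

Lemma Lin0 F : Lin F 0 = 0.
Proof. by rewrite /Lin msupp0 big_seq_fset0. Qed.

Lemma LinN F x : Lin F (- x) = - Lin F x.
Proof. by rewrite -[- x]scaleN1r LinZ scaleN1r. Qed.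

Lemma LinB F x y : Lin F (x - y) = Lin F x - Lin F y.
Proof. by rewrite LinD LinN. Qed.

Lemma LinU F p : Lin F << p >> = F p.
Proof.
by rewrite (@LinEw F [fset p]%fset) ?msuppU_le // big_seq_fset1 mcoeffUU scale1r.
Qed.

Lemma Lin_ext F G x : (forall p, F p = G p) -> Lin F x = Lin G x.
Proof. by move=> e; apply: eq_bigr => p _; rewrite e. Qed.

Lemma LinFD F G x : Lin (fun p => F p + G p) x = Lin F x + Lin G x.
Proof. by rewrite /Lin -big_split; apply: eq_bigr => p _; rewrite scalerDr. Qed.

Lemma LinFN F x : Lin (fun p => - F p) x = - Lin F x.
Proof. by rewrite /Lin -sumrN; apply: eq_bigr => p _; rewrite scalerN. Qed.

Lemma LinFB F G x : Lin (fun p => F p - G p) x = Lin F x - Lin G x.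
Proof. by rewrite LinFD LinFN. Qed.

End LinGen.
Lemma zid (V : zmodType) (G A S B T : V) :
  G - (B + T) = (G - (A + S)) + (A - B) + (S - T).
Proof. by rewrite !opprD !addrA [G - A - S]addrAC subrK [G - S - B + S]addrAC subrK. Qed.

Section ModGen.
Variables (k : fieldType) (W : lmodType k) (P : W -> Prop).
Hypotheses (P0 : P 0) (PD : forall x y, P x -> P y -> P (x + y))
  (PZ : forall (r : k) x, P x -> P (r *: x)).

Lemma PN x : P x -> P (- x).
Proof. by move=> h; rewrite -scaleN1r; apply: PZ. Qed.

Lemma PB x y : P x -> P y -> P (x - y).
Proof. by move=> hx hy; apply: PD => //; apply: PN. Qed.

Lemma Lin_P (K : choiceType) (F : K -> W) x : (forall p, P (F p)) -> P (Lin F x).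
Proof.
move=> h; rewrite /Lin; elim: (msupp x : seq K) => [|p s IH]; first by rewrite big_nil.
by rewrite big_cons; apply: PD => //; apply: PZ.
Qed.

Lemma Lin_cong (K : choiceType) (F G : K -> W) x :
  (forall p, P (F p - G p)) -> P (Lin F x - Lin G x).
Proof. by move=> h; rewrite -LinFB; apply: Lin_P. Qed.

Lemma Lin_comp_mod (K : choiceType) (W' : lmodType k) (g : W' -> W) (F : K -> W') x :
  (forall u v, P (g (u + v) - (g u + g v))) ->
  (forall (r : k) u, P (g (r *: u) - r *: g u)) ->
  P (g (Lin F x) - Lin (fun p => g (F p)) x).
Proof.
move=> gD gZ; rewrite /Lin; elim: (msupp x : seq K) => [|p s IH].
  by rewrite !big_nil subr0; have := gZ 0 0; rewrite !scale0r subr0.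
rewrite !big_cons.
set a := x@_p *: F p; set S := \sum_(i <- s) _; set T := \sum_(i <- s) _.
rewrite (zid _ (g a) (g S)).
by apply: PD; [apply: PD|]; [apply: gD|apply: gZ|exact: IH].
Qed.

Definition eqm (x y : W) := P (x - y).

Lemma eqm_refl x : eqm x x.
Proof. by rewrite /eqm subrr. Qed.
Lemma eqm_sym x y : eqm x y -> eqm y x.
Proof. by rewrite /eqm => h; rewrite -opprB; apply: PN. Qed.
Lemma eqm_trans x y z : eqm x y -> eqm y z -> eqm x z.
Proof.
rewrite /eqm => h1 h2; have := PD h1 h2.
by rewrite addrA subrK.
Qed.
Lemma eqm_add x y x' y' : eqm x x' -> eqm y y' -> eqm (x + y) (x' + y').
Proof.
rewrite /eqm => h1 h2; have := PD h1 h2.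
by rewrite opprD addrACA.
Qed.
Lemma eqm_opp x x' : eqm x x' -> eqm (- x) (- x').
Proof. by rewrite /eqm => h; rewrite -opprD; apply: PN. Qed.
Lemma eqm_sub x y x' y' : eqm x x' -> eqm y y' -> eqm (x - y) (x' - y').
Proof. by move=> h1 h2; apply: eqm_add => //; apply: eqm_opp. Qed.
Lemma eqm_eq x y : x = y -> eqm x y.
Proof. by move=> ->; apply: eqm_refl. Qed.

End ModGen.
Section TensorLemmas.
Variables (k : fieldType) (A : algType k).

Local Notation T2 := (T2 A).
Local Notation T3 := (T3 A).
Local Notation tens2 := (@tens2 k A).
Local Notation tens3 := (@tens3 k A).

Lemma lin2E (W : lmodType k) (f : A -> A -> W) x :
  lin2 f x = Lin (fun p : A * A => f p.1 p.2) x.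
Proof. by []. Qed.
Lemma lin3E (W : lmodType k) (f : A -> A -> A -> W) x :
  lin3 f x = Lin (fun p : A * A * A => f p.1.1 p.1.2 p.2) x.
Proof. by []. Qed.

Lemma lin2U (W : lmodType k) (f : A -> A -> W) a b : lin2 f (tens2 a b) = f a b.
Proof. by rewrite lin2E /tens2 LinU. Qed.
Lemma lin3U (W : lmodType k) (f : A -> A -> A -> W) a b c :
  lin3 f (tens3 a b c) = f a b c.
Proof. by rewrite lin3E /tens3 LinU. Qed.

Lemma lin2D (W : lmodType k) (f : A -> A -> W) x y : lin2 f (x + y) = lin2 f x + lin2 f y.
Proof. by rewrite !lin2E LinD. Qed.
Lemma lin2N (W : lmodType k) (f : A -> A -> W) x : lin2 f (- x) = - lin2 f x.
Proof. by rewrite !lin2E LinN. Qed.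
Lemma lin2B (W : lmodType k) (f : A -> A -> W) x y : lin2 f (x - y) = lin2 f x - lin2 f y.
Proof. by rewrite !lin2E LinB. Qed.
Lemma lin2Z (W : lmodType k) (f : A -> A -> W) r x : lin2 f (r *: x) = r *: lin2 f x.
Proof. by rewrite !lin2E LinZ. Qed.
Lemma lin3D (W : lmodType k) (f : A -> A -> A -> W) x y : lin3 f (x + y) = lin3 f x + lin3 f y.
Proof. by rewrite !lin3E LinD. Qed.
Lemma lin3N (W : lmodType k) (f : A -> A -> A -> W) x : lin3 f (- x) = - lin3 f x.
Proof. by rewrite !lin3E LinN. Qed.
Lemma lin3B (W : lmodType k) (f : A -> A -> A -> W) x y : lin3 f (x - y) = lin3 f x - lin3 f y.
Proof. by rewrite !lin3E LinB. Qed.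
Lemma lin3Z (W : lmodType k) (f : A -> A -> A -> W) r x : lin3 f (r *: x) = r *: lin3 f x.
Proof. by rewrite !lin3E LinZ. Qed.

Lemma lin2_ext (W : lmodType k) (f g : A -> A -> W) x :
  (forall u v, f u v = g u v) -> lin2 f x = lin2 g x.
Proof. by move=> e; rewrite !lin2E; apply: Lin_ext => p; rewrite e. Qed.
Lemma lin2FD (W : lmodType k) (f g : A -> A -> W) x :
  lin2 (fun u v => f u v + g u v) x = lin2 f x + lin2 g x.
Proof. by rewrite !lin2E LinFD. Qed.
Lemma lin2FN (W : lmodType k) (f : A -> A -> W) x :
  lin2 (fun u v => - f u v) x = - lin2 f x.
Proof. by rewrite !lin2E LinFN. Qed.

Lemma Lin_comp (K : choiceType) (W W' : lmodType k) (g : W' -> W) (F : K -> W') x :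
  (forall u v, g (u + v) = g u + g v) -> (forall (r : k) u, g (r *: u) = r *: g u) ->
  g (Lin F x) = Lin (fun p => g (F p)) x.
Proof.
move=> gD gZ; rewrite /Lin; elim: (msupp x : seq K) => [|p s IH].
  by rewrite !big_nil; have := gZ 0 0; rewrite !scale0r.
by rewrite !big_cons gD gZ IH.
Qed.

Lemma lin2_comp2 (W : lmodType k) (f : A -> A -> W) (h : A -> A -> T2) x :
  lin2 f (lin2 h x) = lin2 (fun u v => lin2 f (h u v)) x.
Proof. by rewrite [lin2 f _]lin2E lin2E Lin_comp // => *; rewrite (LinD, LinZ). Qed.
Lemma lin3_comp2 (W : lmodType k) (f : A -> A -> A -> W) (h : A -> A -> T3) x :
  lin3 f (lin2 h x) = lin2 (fun u v => lin3 f (h u v)) x.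
Proof. by rewrite [lin3 f _]lin3E lin2E Lin_comp // => *; rewrite (LinD, LinZ). Qed.

Definition subm (W : lmodType k) (P : W -> Prop) :=
  [/\ P 0, (forall x y, P x -> P y -> P (x + y)) & (forall (r : k) x, P x -> P (r *: x))].

Lemma subm2 : subm (@null2 k A).
Proof. by split; [exact: null2_0|exact: null2_add|exact: null2_scale]. Qed.
Lemma subm3 : subm (@null3 k A).
Proof. by split; [exact: null3_0|exact: null3_add|exact: null3_scale]. Qed.

Lemma lin2_resp (W : lmodType k) (P : W -> Prop) (f : A -> A -> W) : subm P ->
  (forall a a' b, P (f (a + a') b - f a b - f a' b)) ->
  (forall a b b', P (f a (b + b') - f a b - f a b')) ->
  (forall (r : k) a b, P (f (r *: a) b - r *: f a b)) ->
  (forall (r : k) a b, P (f a (r *: b) - r *: f a b)) ->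
  forall x, null2 x -> P (lin2 f x).
Proof.
move=> [P0 PD PZ] h1 h2 h3 h4 x; elim=> //=.
- by move=> a a' b; rewrite !lin2B !lin2U.
- by move=> a b b'; rewrite !lin2B !lin2U.
- by move=> r a b; rewrite !lin2B lin2Z !lin2U.
- by move=> r a b; rewrite !lin2B lin2Z !lin2U.
- by rewrite !lin2E Lin0.
- by move=> y z _ hy _ hz; rewrite lin2D; apply: PD.
- by move=> r y _ hy; rewrite lin2Z; apply: PZ.
Qed.

Lemma lin3_resp (W : lmodType k) (P : W -> Prop) (f : A -> A -> A -> W) : subm P ->
  (forall a a' b c, P (f (a + a') b c - f a b c - f a' b c)) ->
  (forall a b b' c, P (f a (b + b') c - f a b c - f a b' c)) ->
  (forall a b c c', P (f a b (c + c') - f a b c - f a b c')) ->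
  (forall (r : k) a b c, P (f (r *: a) b c - r *: f a b c)) ->
  (forall (r : k) a b c, P (f a (r *: b) c - r *: f a b c)) ->
  (forall (r : k) a b c, P (f a b (r *: c) - r *: f a b c)) ->
  forall x, null3 x -> P (lin3 f x).
Proof.
move=> [P0 PD PZ] h1 h2 h3 h4 h5 h6 x; elim=> //=.
- by move=> a a' b c; rewrite !lin3B !lin3U.
- by move=> a b b' c; rewrite !lin3B !lin3U.
- by move=> a b c c'; rewrite !lin3B !lin3U.
- by move=> r a b c; rewrite !lin3B lin3Z !lin3U.
- by move=> r a b c; rewrite !lin3B lin3Z !lin3U.
- by move=> r a b c; rewrite !lin3B lin3Z !lin3U.
- by rewrite !lin3E Lin0.
- by move=> y z _ hy _ hz; rewrite lin3D; apply: PD.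
- by move=> r y _ hy; rewrite lin3Z; apply: PZ.
Qed.

End TensorLemmas.
Section BrLemmas.
Variables (k : fieldType) (A : algType k) (br : A -> A -> T2 A).
Hypothesis hbr : double_bracket br.

Local Notation tens2 := (@tens2 k A).
Local Notation tens3 := (@tens3 k A).
Local Notation "x == y" := (teq2 x y).

Lemma teq_refl (x : T2 A) : x == x.  Proof. rewrite /teq2 subrr; exact: null2_0. Qed.
Lemma teq_sym (x y : T2 A) : x == y -> y == x.
Proof. exact: (eqm_sym (@null2_scale k A)). Qed.
Lemma teq_trans (x y z : T2 A) : x == y -> y == z -> x == z.
Proof. exact: (eqm_trans (@null2_add k A)). Qed.
Lemma teq_add (x y x' y' : T2 A) : x == x' -> y == y' -> x + y == x' + y'.
Proof. exact: (eqm_add (@null2_add k A)). Qed.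
Lemma teq_opp (x x' : T2 A) : x == x' -> - x == - x'.
Proof. exact: (eqm_opp (@null2_scale k A)). Qed.
Lemma teq_sub (x y x' y' : T2 A) : x == x' -> y == y' -> x - y == x' - y'.
Proof. exact: (eqm_sub (@null2_add k A) (@null2_scale k A)). Qed.
Lemma teq_eq (x y : T2 A) : x = y -> x == y.
Proof. by move=> ->; apply: teq_refl. Qed.

Lemma lin2FB (W : lmodType k) (f g : A -> A -> W) x :
  lin2 (fun u v => f u v - g u v) x = lin2 f x - lin2 g x.
Proof. by rewrite !lin2E LinFB. Qed.
Lemma lin2FZ (W : lmodType k) (f : A -> A -> W) r x :
  lin2 (fun u v => r *: f u v) x = r *: lin2 f x.
Proof.
rewrite !lin2E /Lin scaler_sumr; apply: eq_bigr => p _.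
by rewrite !scalerA mulrC.
Qed.

Lemma lin2_congr (f g : A -> A -> T2 A) x :
  (forall u v, f u v == g u v) -> lin2 f x == lin2 g x.
Proof.
move=> h; rewrite /teq2 !lin2E; apply: Lin_cong.
- exact: null2_0.
- exact: null2_add.
- exact: null2_scale.
- by move=> p; apply: h.
Qed.

Lemma tens2L_comp (f : A -> A -> A) (y : T2 A) v :
  tens2 (lin2 f y) v == lin2 (fun p q => tens2 (f p q) v) y.
Proof.
rewrite /teq2 !lin2E; apply: (@Lin_comp_mod _ _ _ (@null2_add k A) _ _ (fun a => tens2 a v)).
- by move=> u w; rewrite opprD addrA; apply: null2_addl.
- by move=> r u; apply: null2_scalel.
Qed.
Lemma tens2R_comp (f : A -> A -> A) (y : T2 A) u :
  tens2 u (lin2 f y) == lin2 (fun p q => tens2 u (f p q)) y.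
Proof.
rewrite /teq2 !lin2E; apply: (@Lin_comp_mod _ _ _ (@null2_add k A) _ _ (fun a => tens2 u a)).
- by move=> v w; rewrite opprD addrA; apply: null2_addr.
- by move=> r v; apply: null2_scaler.
Qed.

Lemma brl_comp (f : A -> A -> A) (y : T2 A) c :
  br (lin2 f y) c == lin2 (fun p q => br (f p q) c) y.
Proof.
case: hbr => h1 [h2 _].
rewrite /teq2 !lin2E; apply: (@Lin_comp_mod _ _ _ (@null2_add k A) _ _ (fun a => br a c)).
- by move=> u w; apply: h1.
- by move=> r u; apply: h2.
Qed.
Lemma brr_comp (f : A -> A -> A) (y : T2 A) b :
  br b (lin2 f y) == lin2 (fun p q => br b (f p q)) y.
Proof.
case: hbr => _ [_ [h3 [h4 _]]].
rewrite /teq2 !lin2E; apply: (@Lin_comp_mod _ _ _ (@null2_add k A) _ _ (fun a => br b a)).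
- by move=> u w; apply: h3.
- by move=> r u; apply: h4.
Qed.

Lemma tens3_resp (P : T3 A -> Prop) : subm P ->
  (forall a a' b c, P (tens3 (a + a') b c - tens3 a b c - tens3 a' b c)) -> True.
Proof. by []. Qed.

Lemma brL_respP b x : null2 x -> null3 (brL br b x).
Proof.
case: hbr => _ [_ [h1 [h2 _]]].
have G v : forall y, null2 y -> null3 (lin2 (fun p q => tens3 p q v) y).
  apply: lin2_resp; first exact: subm3.
  - by move=> *; apply: null3_add1.
  - by move=> *; apply: null3_add2.
  - by move=> *; apply: null3_scale1.
  - by move=> *; apply: null3_scale2.
apply: lin2_resp; first exact: subm3.
- move=> u u' v; rewrite -!lin2B; apply: G.
  by have := h1 b u u'; rewrite /teq2 opprD addrA.
- move=> u v v'; rewrite -!lin2FB !lin2E; apply: Lin_P.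
  + exact: null3_0. + exact: null3_add. + exact: null3_scale.
  by move=> p; apply: null3_add3.
- move=> r u v; rewrite -lin2Z -lin2B; apply: G; exact: h2.
- move=> r u v; rewrite -lin2FZ -lin2FB !lin2E; apply: Lin_P.
  + exact: null3_0. + exact: null3_add. + exact: null3_scale.
  by move=> p; apply: null3_scale3.
Qed.

End BrLemmas.
Section Resp.
Variables (k : fieldType) (A : algType k).

Lemma swap2_respP (x : T2 A) : null2 x -> null2 (swap2 x).
Proof.
apply: lin2_resp; first exact: subm2.
- by move=> *; apply: null2_addr.
- by move=> *; apply: null2_addl.
- by move=> *; apply: null2_scaler.
- by move=> *; apply: null2_scalel.
Qed.

Lemma tau123_respP (x : T3 A) : null3 x -> null3 (tau123 x).
Proof.
apply: lin3_resp; first exact: subm3.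
- by move=> *; apply: null3_add2.
- by move=> *; apply: null3_add3.
- by move=> *; apply: null3_add1.
- by move=> *; apply: null3_scale2.
- by move=> *; apply: null3_scale3.
- by move=> *; apply: null3_scale1.
Qed.

Lemma tau132_respP (x : T3 A) : null3 x -> null3 (tau132 x).
Proof.
apply: lin3_resp; first exact: subm3.
- by move=> *; apply: null3_add3.
- by move=> *; apply: null3_add1.
- by move=> *; apply: null3_add2.
- by move=> *; apply: null3_scale3.
- by move=> *; apply: null3_scale1.
- by move=> *; apply: null3_scale2.
Qed.

Lemma mult12_respP (x : T3 A) : null3 x -> null2 (mult12 x).
Proof.
apply: lin3_resp; first exact: subm2.
- by move=> *; rewrite mulrDl; apply: null2_addl.
- by move=> *; rewrite mulrDr; apply: null2_addl.
- by move=> *; apply: null2_addr.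
- by move=> *; rewrite -scalerAl; apply: null2_scalel.
- by move=> *; rewrite -scalerAr; apply: null2_scalel.
- by move=> *; apply: null2_scaler.
Qed.

Lemma mult23_respP (x : T3 A) : null3 x -> null2 (mult23 x).
Proof.
apply: lin3_resp; first exact: subm2.
- by move=> *; apply: null2_addl.
- by move=> *; rewrite mulrDl; apply: null2_addr.
- by move=> *; rewrite mulrDr; apply: null2_addr.
- by move=> *; apply: null2_scalel.
- by move=> *; rewrite -scalerAl; apply: null2_scaler.
- by move=> *; rewrite -scalerAr; apply: null2_scaler.
Qed.

End Resp.

Section Folded.
Variables (k : fieldType) (A : algType k).
Lemma swap2D (x y : T2 A) : swap2 (x + y) = swap2 x + swap2 y. Proof. exact: lin2D. Qed.
Lemma swap2B (x y : T2 A) : swap2 (x - y) = swap2 x - swap2 y. Proof. exact: lin2B. Qed.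
Lemma mult12D (x y : T3 A) : mult12 (x + y) = mult12 x + mult12 y. Proof. exact: lin3D. Qed.
Lemma mult23D (x y : T3 A) : mult23 (x + y) = mult23 x + mult23 y. Proof. exact: lin3D. Qed.
Lemma mult12B (x y : T3 A) : mult12 (x - y) = mult12 x - mult12 y. Proof. exact: lin3B. Qed.
Lemma mult23B (x y : T3 A) : mult23 (x - y) = mult23 x - mult23 y. Proof. exact: lin3B. Qed.
Lemma mult12N (x : T3 A) : mult12 (- x) = - mult12 x. Proof. exact: lin3N. Qed.
Lemma mult23N (x : T3 A) : mult23 (- x) = - mult23 x. Proof. exact: lin3N. Qed.
Lemma tau123B (x y : T3 A) : tau123 (x - y) = tau123 x - tau123 y. Proof. exact: lin3B. Qed.
Lemma tau132B (x y : T3 A) : tau132 (x - y) = tau132 x - tau132 y. Proof. exact: lin3B. Qed.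
Lemma tau123N (x : T3 A) : tau123 (- x) = - tau123 x. Proof. exact: lin3N. Qed.
Lemma tau132N (x : T3 A) : tau132 (- x) = - tau132 x. Proof. exact: lin3N. Qed.
Lemma brLB br a (x y : T2 A) : brL br a (x - y) = brL br a x - brL br a y. Proof. exact: lin2B. Qed.
Lemma brLN br a (x : T2 A) : brL br a (- x) = - brL br a x. Proof. exact: lin2N. Qed.
End Folded.

Section Main.
Variables (k : fieldType) (A : algType k) (br : A -> A -> T2 A).
Hypothesis hbr : double_bracket br.

Local Notation tens2 := (@tens2 k A).
Local Notation tens3 := (@tens3 k A).
Local Notation "x == y" := (teq2 x y).

Lemma swap_bl u (y : T2 A) : swap2 (bimod2 u y 1) = lin2 (fun p q => tens2 q (u * p)) y.
Proof.
apply: etrans (lin2_comp2 _ _ _) _; apply: lin2_ext => p q.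
by apply: etrans (lin2U _ _ _) _; rewrite mulr1.
Qed.
Lemma swap_br v (y : T2 A) : swap2 (bimod2 1 y v) = lin2 (fun p q => tens2 (q * v) p) y.
Proof.
apply: etrans (lin2_comp2 _ _ _) _; apply: lin2_ext => p q.
by apply: etrans (lin2U _ _ _) _; rewrite mul1r.
Qed.
Lemma bimod2_l u (y : T2 A) : bimod2 u y 1 = lin2 (fun p q => tens2 (u * p) q) y.
Proof. by apply: lin2_ext => p q; rewrite mulr1. Qed.
Lemma bimod2_r v (y : T2 A) : bimod2 1 y v = lin2 (fun p q => tens2 p (q * v)) y.
Proof. by apply: lin2_ext => p q; rewrite mul1r. Qed.

Lemma deriv1 u v c : br (u * v) c ==
  - lin2 (fun p q => tens2 q (u * p)) (br c v) - lin2 (fun p q => tens2 (q * v) p) (br c u).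
Proof.
case: (hbr) => _ [_ [_ [_ [hL hS]]]].
apply: teq_trans (hS (u * v) c) _.
apply: (@teq_trans _ _ _ (- swap2 (bimod2 u (br c v) 1 + bimod2 1 (br c u) v))).
  apply: teq_opp; rewrite /teq2 -swap2B; exact: (swap2_respP (hL c u v)).
apply: teq_eq.
exact: (etrans (congr1 (fun t => - t) (swap2D _ _)) (etrans (opprD _ _)
  (congr2 (fun s t => - s - t) (swap_bl u (br c v)) (swap_br v (br c u))))).
Qed.

Lemma deriv2 b u v : br b (u * v) ==
  lin2 (fun p q => tens2 (u * p) q) (br b v) + lin2 (fun p q => tens2 p (q * v)) (br b u).
Proof.
case: (hbr) => _ [_ [_ [_ [hL hS]]]].
apply: teq_trans (hL b u v) _.
by rewrite bimod2_l bimod2_r; apply: teq_refl.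
Qed.



Lemma brL_lin2 a (h : A -> A -> T2 A) x : brL br a (lin2 h x) = lin2 (fun u v => brL br a (h u v)) x.
Proof. exact: lin2_comp2. Qed.
Lemma tau123_lin2 (h : A -> A -> T3 A) x : tau123 (lin2 h x) = lin2 (fun u v => tau123 (h u v)) x.
Proof. exact: lin3_comp2. Qed.
Lemma tau132_lin2 (h : A -> A -> T3 A) x : tau132 (lin2 h x) = lin2 (fun u v => tau132 (h u v)) x.
Proof. exact: lin3_comp2. Qed.
Lemma mult12_lin2 (h : A -> A -> T3 A) x : mult12 (lin2 h x) = lin2 (fun u v => mult12 (h u v)) x.
Proof. exact: lin3_comp2. Qed.
Lemma mult23_lin2 (h : A -> A -> T3 A) x : mult23 (lin2 h x) = lin2 (fun u v => mult23 (h u v)) x.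
Proof. exact: lin3_comp2. Qed.
Lemma brL_U a u v : brL br a (tens2 u v) = lin2 (fun p q => tens3 p q v) (br a u).
Proof. exact: lin2U. Qed.
Lemma tau123_U p q r : tau123 (tens3 p q r) = tens3 r p q.
Proof. exact: lin3U. Qed.
Lemma tau132_U p q r : tau132 (tens3 p q r) = tens3 q r p.
Proof. exact: lin3U. Qed.
Lemma mult12_U p q r : mult12 (tens3 p q r) = tens2 (p * q) r.
Proof. exact: lin3U. Qed.
Lemma mult23_U p q r : mult23 (tens3 p q r) = tens2 p (q * r).
Proof. exact: lin3U. Qed.

Lemma C1 a (y : T2 A) : mult12 (brL br a y) =
  lin2 (fun u v => lin2 (fun p q => tens2 (p * q) v) (br a u)) y.
Proof.
rewrite [brL _ _ _]/brL mult12_lin2; apply: lin2_ext => u v.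
by rewrite mult12_lin2; apply: lin2_ext => p q; rewrite mult12_U.
Qed.
Lemma C2 b (y : T2 A) : mult12 (tau123 (brL br b (swap2 y))) =
  lin2 (fun u v => lin2 (fun p q => tens2 (u * p) q) (br b v)) y.
Proof.
rewrite [swap2 _]/swap2 brL_lin2 tau123_lin2 mult12_lin2; apply: lin2_ext => u v.
rewrite brL_U tau123_lin2 mult12_lin2; apply: lin2_ext => p q.
by rewrite tau123_U mult12_U.
Qed.
Lemma C3 c (y : T2 A) : mult12 (tau132 (brL br c y)) =
  lin2 (fun u v => lin2 (fun p q => tens2 (q * v) p) (br c u)) y.
Proof.
rewrite [brL _ _ _]/brL tau132_lin2 mult12_lin2; apply: lin2_ext => u v.
rewrite tau132_lin2 mult12_lin2; apply: lin2_ext => p q.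
by rewrite tau132_U mult12_U.
Qed.
Lemma C4 b (y : T2 A) : mult23 (brL br b y) =
  lin2 (fun u v => lin2 (fun p q => tens2 p (q * v)) (br b u)) y.
Proof.
rewrite [brL _ _ _]/brL mult23_lin2; apply: lin2_ext => u v.
by rewrite mult23_lin2; apply: lin2_ext => p q; rewrite mult23_U.
Qed.
Lemma C5 a (y : T2 A) : mult23 (tau123 (brL br a (swap2 y))) =
  lin2 (fun u v => lin2 (fun p q => tens2 u (p * q)) (br a v)) y.
Proof.
rewrite [swap2 _]/swap2 brL_lin2 tau123_lin2 mult23_lin2; apply: lin2_ext => u v.
rewrite brL_U tau123_lin2 mult23_lin2; apply: lin2_ext => p q.
by rewrite tau123_U mult23_U.
Qed.
Lemma C6 c (y : T2 A) : mult23 (tau132 (brL br c (swap2 y))) =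
  lin2 (fun u v => lin2 (fun p q => tens2 q (u * p)) (br c v)) y.
Proof.
rewrite [swap2 _]/swap2 brL_lin2 tau132_lin2 mult23_lin2; apply: lin2_ext => u v.
rewrite brL_U tau132_lin2 mult23_lin2; apply: lin2_ext => p q.
by rewrite tau132_U mult23_U.
Qed.

Lemma Q12_123 b (x y : T2 A) : x == y -> mult12 (tau123 (brL br b x)) == mult12 (tau123 (brL br b y)).
Proof.
move=> h; rewrite /teq2 -mult12B -tau123B -brLB.
exact: (mult12_respP (tau123_respP (brL_respP hbr b h))).
Qed.
Lemma Q23_123 b (x y : T2 A) : x == y -> mult23 (tau123 (brL br b x)) == mult23 (tau123 (brL br b y)).
Proof.
move=> h; rewrite /teq2 -mult23B -tau123B -brLB.
exact: (mult23_respP (tau123_respP (brL_respP hbr b h))).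
Qed.
Lemma Q23_132 b (x y : T2 A) : x == y -> mult23 (tau132 (brL br b x)) == mult23 (tau132 (brL br b y)).
Proof.
move=> h; rewrite /teq2 -mult23B -tau132B -brLB.
exact: (mult23_respP (tau132_respP (brL_respP hbr b h))).
Qed.

Lemma split_nn (f g : A -> A -> T2 A) x :
  lin2 (fun u v => - f u v - g u v) x = - lin2 f x - lin2 g x.
Proof. by rewrite lin2FB lin2FN. Qed.


Lemma mult12_3 (x y z : T3 A) : mult12 (x + y + z) = mult12 x + mult12 y + mult12 z.
Proof. by rewrite !mult12D. Qed.
Lemma mult23_3 (x y z : T3 A) : mult23 (x + y + z) = mult23 x + mult23 y + mult23 z.
Proof. by rewrite !mult23D. Qed.

Lemma zid2 (V : zmodType) (X1 X2 Y1 Y2 Z1 Z2 : V) :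
  (X1 + X2) - (- Z1 - Z2) - (Y1 + Y2) = (X1 + - Y1 + Z2) - (Y2 + - X2 + - Z1).
Proof.
rewrite !opprD !opprK -!addrA; congr (X1 + _).
rewrite [- Y2 + (X2 + Z1)]addrCA [Z2 + (X2 + _)]addrCA [- Y1 + (X2 + _)]addrCA.
congr (X2 + _).
rewrite [- Y2 + Z1]addrC [Z2 + (Z1 + _)]addrCA [- Y1 + (Z1 + _)]addrCA.
by congr (Z1 + _); rewrite addrCA.
Qed.

Lemma main_br a b c :
  teq2
    (assoc_bracket_T br a (br b c) - br (assoc_bracket br a b) c
       - br b (assoc_bracket br a c))
    (mult12 (tri_bracket br a b c) - mult23 (tri_bracket br b a c)).
Proof.
case: (hbr) => _ [_ [_ [_ [hL hS]]]].
have hL1 : assoc_bracket_T br a (br b c) =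
   lin2 (fun u v => tens2 (assoc_bracket br a u) v) (br b c)
   + lin2 (fun u v => tens2 u (assoc_bracket br a v)) (br b c).
  exact: lin2FD.
have hL2 : br (assoc_bracket br a b) c ==
   - lin2 (fun u v => lin2 (fun p q => tens2 q (u * p)) (br c v)) (br a b)
   - lin2 (fun u v => lin2 (fun p q => tens2 (q * v) p) (br c u)) (br a b).
  apply: teq_trans (brl_comp hbr (fun u v => u * v) (br a b) c) _.
  apply: teq_trans (lin2_congr (br a b) (fun u v => deriv1 u v c)) _.
  apply: teq_eq; exact: split_nn.
have hL3 : br b (assoc_bracket br a c) ==
   lin2 (fun u v => lin2 (fun p q => tens2 (u * p) q) (br b v)) (br a c)
   + lin2 (fun u v => lin2 (fun p q => tens2 p (q * v)) (br b u)) (br a c).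
  apply: teq_trans (brr_comp hbr (fun u v => u * v) (br a c) b) _.
  apply: teq_trans (lin2_congr (br a c) (fun u v => deriv2 b u v)) _.
  apply: teq_eq; exact: lin2FD.
have hR1 : mult12 (brL br a (br b c)) ==
    lin2 (fun u v => tens2 (assoc_bracket br a u) v) (br b c).
  rewrite C1; apply: lin2_congr => u v; apply: teq_sym; exact: tens2L_comp.
have hR2 : mult12 (tau123 (brL br b (br c a))) ==
    - lin2 (fun u v => lin2 (fun p q => tens2 (u * p) q) (br b v)) (br a c).
  apply: teq_trans (Q12_123 b (hS c a)) _.
  by apply: teq_eq; rewrite brLN tau123N mult12N C2.
have hR3 : mult12 (tau132 (brL br c (br a b))) ==
    lin2 (fun u v => lin2 (fun p q => tens2 (q * v) p) (br c u)) (br a b).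
  exact: teq_eq (C3 c (br a b)).
have hS1 : mult23 (brL br b (br a c)) ==
    lin2 (fun u v => lin2 (fun p q => tens2 p (q * v)) (br b u)) (br a c).
  exact: teq_eq (C4 b (br a c)).
have hS2 : mult23 (tau123 (brL br a (br c b))) ==
    - lin2 (fun u v => tens2 u (assoc_bracket br a v)) (br b c).
  apply: teq_trans (Q23_123 a (hS c b)) _.
  rewrite brLN tau123N mult23N C5; apply: teq_opp.
  apply: lin2_congr => u v; apply: teq_sym; exact: tens2R_comp.
have hS3 : mult23 (tau132 (brL br c (br b a))) ==
    - lin2 (fun u v => lin2 (fun p q => tens2 q (u * p)) (br c v)) (br a b).
  apply: teq_trans (Q23_132 c (hS b a)) _.
  by apply: teq_eq; rewrite brLN tau132N mult23N C6.
apply: teq_trans (teq_sub (teq_sub (teq_eq hL1) hL2) hL3) _.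
rewrite zid2; apply: teq_sym.
rewrite /tri_bracket mult12_3 mult23_3.
apply: teq_sub; (apply: teq_add; first apply: teq_add).
- exact: hR1.
- exact: hR2.
- exact: hR3.
- exact: hS1.
- exact: hS2.
- exact: hS3.
Qed.

End Main.

Unset Implicit Arguments.
Set Strict Implicit.

Theorem proposition2p4p2 (k : fieldType) (hchar : [pchar k] =i pred0)
  (A : algType k) (br : A -> A -> T2 A) (hbr : double_bracket br) (a b c : A) :
  teq2
    (assoc_bracket_T br a (br b c) - br (assoc_bracket br a b) c
       - br b (assoc_bracket br a c))
    (mult12 (tri_bracket br a b c) - mult23 (tri_bracket br b a c)).
Proof. exact: (main_br hbr a b c). Qed.
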